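(* Let $T>0$. For $n=0,1,2,\dots$ let $\mathcal{H}_n(x,t)$ denote the two-dimensional Hermite polynomials defined for $t>0$ by $$\mathcal{H}_{n}(x,t)=\frac{(-t)^n}{n!}\,e^{\frac{x^2}{2t}}\frac{d^n}{dx^n}\Big(e^{-\frac{x^2}{2t}}\Big),$$ and $\mathcal{H}_n(x,0)=\frac{x^n}{n!}$ (equivalently, $\mathcal{H}_0=1$, $\mathcal{H}_{-1}=0$, $(n+1)\mathcal{H}_{n+1}(x,t)=x\,\mathcal{H}_n(x,t)-t\,\mathcal{H}_{n-1}(x,t)$; e.g. $\mathcal{H}_1=x$, $\mathcal{H}_2=\frac{x^2}{2}-\frac{t}{2}$). For each $n\ge 0$ let $\{\mathcal{P}_{m,n}(t)\}_{m=0}^{\infty}$ be the family of orthogonal polynomials on $(0,T)$ with respect to the weight $\omega_n(t)=t^n$, where $\mathcal{P}_{m,n}$ has degree $m$, i.e. $\int_0^T t^n\,\mathcal{P}_{r,n}(t)\mathcal{P}_{s,n}(t)\,dt=0$ for $r\neq s$. Then every polynomial in the two variables $t$ and $x$ lies in the linear span of the set $\{\mathcal{P}_{m,n}(t)\,\mathcal{H}_n(x,t)\}_{m,n=0}^{\infty}$.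
   Context: The set $\{\mathcal{P}_{m,n}(t)\mathcal{H}_n(x,t)\}_{m,n\ge 0}$ is orthogonal in the space $\mathbb{L}^2_{\gamma_t}(\mathbb{R}\times[0,T])$ of functions $f(x,t)$ with $\int_0^T\int_{-\infty}^{\infty} f(x,t)^2\gamma_t\,dx\,dt<\infty$, where $\gamma_t=\frac{1}{\sqrt{2\pi t}}e^{-x^2/(2t)}$. *)

(* Defs.v *)
From HB Require Import structures.
From mathcomp Require Import all_boot all_order all_algebra.
From mathcomp Require Import all_classical all_reals all_analysis.
Set Implicit Arguments. Unset Strict Implicit. Unset Printing Implicit Defensive.
Import Order.TTheory GRing.Theory Num.Theory.
Local Open Scope ring_scope.

(* Bivariate polynomials in (x,t) are represented as {poly {poly R}}:
   the outer variable 'X is x, coefficients are polynomials in t. *)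
Section Hermite.
Variable R : fieldType.

Definition tvar : {poly {poly R}} := ('X : {poly R})%:P.

Fixpoint hermite2_pair (n : nat) : {poly {poly R}} * {poly {poly R}} :=
  match n with
  | 0 => (1, 'X)
  | k.+1 => let (a, b) := hermite2_pair k in
            (b, ((k.+2)%:R^-1)%:P%:P * ('X * b - tvar * a))
  end.

Definition hermite2 (n : nat) : {poly {poly R}} := (hermite2_pair n).1.
End Hermite.

Definition in_span2 (R : fieldType) (f : nat -> nat -> {poly {poly R}})
  (p : {poly {poly R}}) : Prop :=
  exists (N : nat) (c : nat -> nat -> R),
    p = \sum_(m < N) \sum_(n < N) (c m n)%:P%:P * f m n.

(* Main.v *)
Require Import Defs.
From HB Require Import structures.
From mathcomp Require Import all_boot all_order all_algebra.
From mathcomp Require Import all_classical all_reals all_analysis.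
Import Order.TTheory GRing.Theory Num.Theory.
Local Open Scope ring_scope.

Section Aux.
Variable R : realType.

Lemma size_sub_lt (K : nzRingType) (p q : {poly K}) : p != 0 -> size q = size p ->
  lead_coef q = lead_coef p -> (size (p - q)%R < size p)%N.
Proof.
move=> p0 hs hl.
have hle : (size (p - q)%R <= size p)%N.
  by have := size_polyD p (- q); rewrite size_polyN hs maxnn.
rewrite ltn_neqAle hle andbT; apply/negP => /eqP hr.
have : lead_coef (p - q) == 0.
  by rewrite lead_coefE hr coefB -lead_coefE -hs -lead_coefE hl subrr.
rewrite lead_coef_eq0 subr_eq0 => /eqP pq.
by move: hr; rewrite pq subrr size_poly0 => /esym/eqP; rewrite size_poly_eq0 -pq (negbTE p0).
Qed.

Lemma hermite2_S n : hermite2 R n.+1 = (hermite2_pair R n).2.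
Proof. by rewrite /hermite2 /=; case: (hermite2_pair R n). Qed.

Lemma hermite2_SS n : hermite2 R n.+2 =
  ((n.+2)%:R^-1)%:P%:P * ('X * hermite2 R n.+1 - tvar R * hermite2 R n).
Proof.
rewrite /hermite2 /=; case: (hermite2_pair R n) => a b /=. done.
Qed.

Definition goodH (h : {poly {poly R}}) n :=
  size h = n.+1 /\ exists a : R, a != 0 /\ lead_coef h = a%:P.

Lemma hermite2_good n : goodH (hermite2 R n) n /\ goodH (hermite2 R n.+1) n.+1.
Proof.
elim: n => [|n [IH1 IH2]].
  split.
    split; first by rewrite /hermite2 /= size_poly1.
    by exists 1; split; [exact: oner_neq0 | rewrite /hermite2 /= lead_coef1 ?polyC1].
  rewrite hermite2_S /=; split; first by rewrite size_polyX.
  by exists 1; split; [exact: oner_neq0 | rewrite lead_coefX ?polyC1].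
split=> //.
rewrite hermite2_SS.
case: IH1 => s1 [a1 [a10 l1]]; case: IH2 => s2 [a2 [a20 l2]].
have k0 : ((n.+2)%:R^-1 : R) != 0 by rewrite invr_eq0 pnatr_eq0.
have h20 : hermite2 R n.+1 != 0 by rewrite -size_poly_eq0 s2.
have t0 : (('X : {poly R}) != 0) by rewrite -size_poly_eq0 size_polyX.
have sX : size ('X * hermite2 R n.+1) = n.+3.
  by rewrite mulrC size_mulX // s2.
have sT : size (tvar R * hermite2 R n) = n.+1.
  by rewrite /tvar size_Cmul // s1.
have sD : size ('X * hermite2 R n.+1 - tvar R * hermite2 R n) = n.+3.
  by rewrite size_polyDl sX // size_polyN sT.
have lD : lead_coef ('X * hermite2 R n.+1 - tvar R * hermite2 R n) = a2%:P.
  by rewrite lead_coefDl ?size_polyN ?sT ?sX // mulrC lead_coefMX l2.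
split; first by rewrite size_Cmul ?polyC_eq0 // sD.
exists ((n.+2)%:R^-1 * a2); split; first by rewrite mulf_neq0.
by rewrite lead_coefM lD lead_coefC polyCM.
Qed.


Section Span.
Variable f : nat -> nat -> {poly {poly R}}.

Lemma span0 : in_span2 f 0.
Proof. by exists 0%N, (fun _ _ => 0); rewrite big_ord0. Qed.

Lemma span_widen N M (c : nat -> nat -> R) : (N <= M)%N ->
  \sum_(m < N) \sum_(n < N) (c m n)%:P%:P * f m n =
  \sum_(m < M) \sum_(n < M)
     (if (m < N)%N && (n < N)%N then c m n else 0)%:P%:P * f m n.
Proof.
move=> hNM.
rewrite (big_ord_widen M (fun m => \sum_(n < N) (c m n)%:P%:P * f m n)) //.
rewrite big_mkcond /=; apply: eq_bigr => m _.
case: (m < N)%N => /=.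
  rewrite (big_ord_widen M (fun n => (c m n)%:P%:P * f m n)) // big_mkcond /=.
  apply: eq_bigr => n _; case: (n < N)%N => //=.
  by rewrite !polyC0 mul0r.
by rewrite big1 // => n _; rewrite !polyC0 mul0r.
Qed.

Lemma span_add p q : in_span2 f p -> in_span2 f q -> in_span2 f (p + q).
Proof.
move=> [N1 [c1 ->]] [N2 [c2 ->]].
exists (maxn N1 N2), (fun m n => (if (m < N1)%N && (n < N1)%N then c1 m n else 0)
   + (if (m < N2)%N && (n < N2)%N then c2 m n else 0)).
rewrite (span_widen _ _ c1 (leq_maxl N1 N2)) (span_widen _ _ c2 (leq_maxr N1 N2)).
rewrite -big_split; apply: eq_bigr => m _; rewrite -big_split.
by apply: eq_bigr => n _ /=; rewrite !rmorphD mulrDl.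
Qed.

Lemma span_scale a p : in_span2 f p -> in_span2 f (a%:P%:P * p).
Proof.
move=> [N [c ->]]; exists N, (fun m n => a * c m n).
rewrite mulr_sumr; apply: eq_bigr => m _; rewrite mulr_sumr.
by apply: eq_bigr => n _; rewrite !polyCM mulrA.
Qed.

Lemma span_gen m n : in_span2 f (f m n).
Proof.
exists (maxn m n).+1, (fun i j => ((i == m) && (j == n))%:R).
have hm : (m < (maxn m n).+1)%N by rewrite ltnS leq_maxl.
have hn : (n < (maxn m n).+1)%N by rewrite ltnS leq_maxr.
rewrite (bigD1 (Ordinal hm)) //=.
rewrite [X in _ + X]big1 ?addr0; last first.
  move=> i hi; apply: big1 => j _; move: hi; rewrite -val_eqE /= => /negbTE ->.
  by rewrite /= !polyC0 mul0r.
rewrite (bigD1 (Ordinal hn)) //= !eqxx /=.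
rewrite [X in _ + X]big1 ?addr0 ?polyC1 ?mul1r //.
move=> j hj; move: hj; rewrite -val_eqE /= => /negbTE ->.
by rewrite /= !polyC0 mul0r.
Qed.

End Span.
Section Main.
Variable P : nat -> nat -> {poly R}.
Hypothesis hdeg : forall m n, size (P m n) = m.+1.
Let f := fun m n => (P m n)%:P * hermite2 R n.

Lemma spanA n (g : {poly R}) : in_span2 f (g%:P * hermite2 R n).
Proof.
elim: {g}(size g) {-2}g (leqnn (size g)) => [|k IH] g hg.
  move: hg; rewrite leqn0 size_poly_eq0 => /eqP ->.
  by rewrite polyC0 mul0r; apply: span0.
have [->|g0] := eqVneq g 0; first by rewrite polyC0 mul0r; apply: span0.
set k' := (size g).-1.
have sP : size (P k' n) = size g by rewrite hdeg /k' prednK // lt0n size_poly_eq0.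
have P0 : P k' n != 0 by rewrite -size_poly_eq0 hdeg.
set b := lead_coef (P k' n).
have b0 : b != 0 by rewrite lead_coef_eq0.
set d := lead_coef g / b.
have d0 : d != 0 by rewrite mulf_neq0 ?invr_eq0 ?lead_coef_eq0.
have hlt := (@size_sub_lt _ g (d%:P * P k' n) g0).
have hlt' : (size (g - d%:P * P k' n)%R < size g)%N.
  apply: hlt; first by rewrite size_Cmul.
  by rewrite lead_coefM lead_coefC -/b /d mulfVK.
clearbody d.
have -> : g = (g - d%:P * P k' n) + d%:P * P k' n by rewrite subrK.
rewrite rmorphD mulrDl; apply: span_add.
  by apply: IH; rewrite -ltnS; apply: leq_trans hlt' hg.
rewrite rmorphM -mulrA; apply: span_scale; exact: (span_gen f k' n).
Qed.

Lemma span_all (p : {poly {poly R}}) : in_span2 f p.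
Proof.
elim: {p}(size p) {-2}p (leqnn (size p)) => [|k IH] p hp.
  move: hp; rewrite leqn0 size_poly_eq0 => /eqP ->; exact: span0.
have [->|p0] := eqVneq p 0; first exact: span0.
set k' := (size p).-1.
have [[sH [a [a0 lH]]] _] := hermite2_good k'.
have sH' : size (hermite2 R k') = size p by rewrite sH /k' prednK // lt0n size_poly_eq0.
set g := (a^-1)%:P * lead_coef p.
have g0 : g != 0 by rewrite mulf_neq0 ?polyC_eq0 ?invr_eq0 ?lead_coef_eq0.
have hlt' : (size (p - g%:P * hermite2 R k')%R < size p)%N.
  apply: size_sub_lt => //; first by rewrite size_Cmul.
  rewrite lead_coefM lead_coefC lH /g mulrAC -polyCM mulVf // polyC1 mul1r //.
have -> : p = (p - g%:P * hermite2 R k') + g%:P * hermite2 R k' by rewrite subrK.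
apply: span_add; last exact: spanA.
by apply: IH; rewrite -ltnS; apply: leq_trans hlt' hp.
Qed.

End Main.
End Aux.

Theorem theorem2 (R : realType) (T : R) (hT : 0 < T)
  (P : nat -> nat -> {poly R})
  (hdeg : forall m n, size (P m n) = m.+1)
  (horth : forall n r s, r <> s ->
     Rintegral lebesgue_measure `]0, T[%classic
       (fun t => t ^+ n * (P r n).[t] * (P s n).[t]) = 0) :
  forall p : {poly {poly R}},
    in_span2 (fun m n => (P m n)%:P * hermite2 R n) p.
Proof. move=> p; exact: (@span_all R P hdeg p). Qed.
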